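(* For any $(\hat\imath,\hat\jmath)\in\mathcal E$ with associated matrices $B_1,B_2$, $$\inf_{u^s\in\Delta_J}\Big(1+\big\langle e,B_1^{-1}B_2u^s\big\rangle\Big)>0.$$
   Context: Network: $\mathcal I=\{1,\dots,I\}$, $\mathcal J=\{1,\dots,J\}$, edges $\mathcal E\subset\mathcal I\times\mathcal J$ with the bipartite graph $\mathcal G=(\mathcal I\cup\mathcal J,\mathcal E)$ a tree; $\mathbb R^{\mathcal G}$ denotes arrays in $\mathbb R^{I\times J}$ vanishing off $\mathcal E$. Service rates $\mu_{ij}>0$ for $(i,j)\in\mathcal E$; $\mathcal J(i)=\{j:(i,j)\in\mathcal E\}$. Let $\mathcal D=\{(\alpha,\beta)\in\mathbb R^I\times\mathbb R^J:\sum_i\alpha_i=\sum_j\beta_j\}$ and $\Psi:\mathcal D\to\mathbb R^{\mathcal G}$ the unique linear map with $\sum_j\Psi_{ij}(\alpha,\beta)=\alpha_i$, $\sum_i\Psi_{ij}(\alpha,\beta)=\beta_j$. For $(\hat\imath,\hat\jmath)\in\mathcal E$, $B_1\in\mathbb R^{I\times I}$ and $B_2\in\mathbb R^{I\times J}$ are the unique matrices with column $\hat\jmath$ of $B_2$ zero and $\sum_{j\in\mathcal J(i)}\mu_{ij}\Psi_{ij}(\alpha,\beta)=(B_1\alpha+B_2\beta)_i$ for all $i$ and $(\alpha,\beta)\in\mathcal D$ ($B_1$ is invertible). $e$ is the all-ones vector and $\Delta_J=\{u\in\mathbb R^J_+:\langle e,u\rangle=1\}$. *)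

(* Defs.v *)
From HB Require Import structures.
From mathcomp Require Import all_boot all_order all_algebra.
Set Implicit Arguments. Unset Strict Implicit. Unset Printing Implicit Defensive.
Import Order.TTheory GRing.Theory Num.Theory.
Local Open Scope ring_scope.

(* Vertices of the bipartite graph G = (I u J, E): classes inl i, servers inr j. *)
Definition gvert (I J : nat) : finType := ('I_I + 'I_J)%type.

Definition gadj (I J : nat) (E : {set 'I_I * 'I_J}) : rel (gvert I J) :=
  fun x y => match x, y with
             | inl i, inr j => (i, j) \in E
             | inr j, inl i => (i, j) \in E
             | _, _ => false
             end.

Definition gconnected (I J : nat) (E : {set 'I_I * 'I_J}) : Prop :=
  forall x y : gvert I J, connect (gadj E) x y.

Definition gacyclic (I J : nat) (E : {set 'I_I * 'I_J}) : Prop :=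
  forall c : seq (gvert I J), uniq c -> (3 <= size c)%N -> ~~ cycle (gadj E) c.

Definition is_tree (I J : nat) (E : {set 'I_I * 'I_J}) : Prop :=
  gconnected E /\ gacyclic E.

Definition inD (R : nzRingType) (I J : nat) (a : 'cV[R]_I) (b : 'cV[R]_J) : Prop :=
  \sum_i a i 0 = \sum_j b j 0.

Definition is_Psi (R : nzRingType) (I J : nat) (E : {set 'I_I * 'I_J})
  (Psi : 'cV[R]_I -> 'cV[R]_J -> 'M[R]_(I, J)) : Prop :=
  forall a b, inD a b ->
    [/\ forall i j, (i, j) \notin E -> Psi a b i j = 0,
        forall i, \sum_j Psi a b i j = a i 0
      & forall j, \sum_i Psi a b i j = b j 0].

Definition are_B (R : nzRingType) (I J : nat) (E : {set 'I_I * 'I_J})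
  (mu : 'I_I -> 'I_J -> R) (Psi : 'cV[R]_I -> 'cV[R]_J -> 'M[R]_(I, J))
  (jhat : 'I_J) (B1 : 'M[R]_I) (B2 : 'M[R]_(I, J)) : Prop :=
  (forall i, B2 i jhat = 0) /\
  (forall a b, inD a b -> forall i,
     \sum_(j | (i, j) \in E) mu i j * Psi a b i j = (B1 *m a + B2 *m b) i 0).

(* Main.v *)
Require Import Defs.
From HB Require Import structures.
From mathcomp Require Import all_boot all_order all_algebra.
From mathcomp Require Import zify ring lra.
Import Order.TTheory GRing.Theory Num.Theory.
Local Open Scope ring_scope.

Lemma maxpath (T : finType) (d : rel T) : forall n (x : T) (p : seq T),
  (#|T| - size p <= n)%N -> uniq (x :: p) -> path d x p ->
  exists q, [/\ uniq (x :: p ++ q), path d x (p ++ q) &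
     forall w, d (last x (p ++ q)) w -> w \in x :: p ++ q].
Proof.
elim=> [|n IH] x p hn hu hp;
  (case: (boolP [exists w, d (last x p) w && (w \notin x :: p)]) =>
    [/existsP [w /andP [dw hw]] | hno]); last 1 first.
- exists [::]; rewrite cats0; split => // w dw.
  by apply/negPn/negP => hw; move/existsPn: hno => /(_ w); rewrite dw hw.
- have hu' : uniq (w :: x :: p) by rewrite cons_uniq hw hu.
  have /card_uniqP hc := hu'.
  have hle : (size (w :: x :: p) <= #|T|)%N by rewrite -hc max_card.
  exfalso; move: hn hle => /=; lia.
- exists [::]; rewrite cats0; split => // w dw.
  by apply/negPn/negP => hw; move/existsPn: hno => /(_ w); rewrite dw hw.
- have hu' : uniq (x :: rcons p w) by rewrite -rcons_cons rcons_uniq hw hu.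
  have hp' : path d x (rcons p w) by rewrite rcons_path hp dw.
  have hn' : (#|T| - size (rcons p w) <= n)%N by rewrite size_rcons; lia.
  have [q [h1 h2 h3]] := IH x (rcons p w) hn' hu' hp'.
  by exists (w :: q); rewrite -cat_rcons.
Qed.

Lemma path_suffix (T : eqType) (d : rel T) x s p1 w p2 :
  path d x s -> x :: s = p1 ++ w :: p2 -> path d w p2.
Proof.
case: p1 => [|y p1] /= hp.
  by case=> <- <-.
case=> _ Es; move: hp; rewrite Es cat_path /= => /and3P [].
by [].
Qed.

Lemma dcycle (T : finType) (d : rel T) :
  (forall a b, d a b -> ~~ d b a) ->
  (forall a b, d a b -> exists c, d b c) ->
  forall a b, d a b -> exists c : seq T, [/\ uniq c, (3 <= size c)%N & cycle d c].
Proof.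
move=> anti step a b dab.
have hab : a != b by apply/eqP => E; move: dab (anti _ _ dab); rewrite -E => ->.
have hu0 : uniq [:: a; b] by rewrite /= inE andbT hab.
have hp0 : path d a [:: b] by rewrite /= dab.
have [q [hu hp hmax]] := @maxpath T d #|T| a [:: b] (leq_subr _ _) hu0 hp0.
have E1 : [:: b] ++ q = rcons (belast b q) (last b q) by rewrite /= lastI.
move: hu hp hmax; rewrite E1.
move: (belast b q) (last b q) => r' v hu hp hmax.
move: hp; rewrite rcons_path => /andP [hp1 duv].
have [w dvw] := step _ _ duv.
have hw : w \in a :: r'.
  move: (hmax w); rewrite last_rcons => /(_ dvw); rewrite -rcons_cons mem_rcons inE => /orP [/eqP E|//].
  by move: dvw (anti _ _ dvw); rewrite -E => ->.
have [p1 [p2 Es]] : exists p1 p2, a :: r' = p1 ++ w :: p2.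
  by case/splitPr: hw => p1 p2; exists p1, p2.
exists (w :: rcons p2 v).
have Elast : last a r' = last w p2.
  by rewrite -[last a r']/(last a (a :: r')) Es last_cat.
split.
- by move: hu; rewrite -rcons_cons Es rcons_cat cat_uniq => /and3P [].
- case: p2 Es Elast {hu hp1} => [|y p2] /= Es El; last by rewrite size_rcons.
  by move: (anti _ _ duv); rewrite El dvw.
- by rewrite /= !rcons_path (@path_suffix _ d a r' p1 w p2 hp1 Es) -Elast duv last_rcons dvw.
Qed.

Definition dflow (R : realFieldType) I J (E : {set 'I_I * 'I_J}) (x : 'M[R]_(I,J))
  : rel (gvert I J) :=
  fun a b => match a, b with
  | inr j, inl i => ((i,j) \in E) && (0 < x i j)
  | inl i, inr j => ((i,j) \in E) && (x i j < 0)
  | _, _ => false end.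
Arguments dflow {R I J} E x.

Lemma flow_zero (R : realFieldType) I J (E : {set 'I_I * 'I_J})
  (mu : 'I_I -> 'I_J -> R) (x : 'M[R]_(I,J)) :
  gacyclic E -> (forall i j, (i,j) \in E -> 0 < mu i j) ->
  (forall i j, (i,j) \notin E -> x i j = 0) ->
  (forall i, \sum_(j | (i,j) \in E) mu i j * x i j = 0) ->
  (forall j, 0 <= \sum_i x i j) ->
  forall i j, x i j = 0.
Proof.
move=> hac hmu hoff hrow hcol i0 j0.
case: (boolP ((i0,j0) \in E)) => hE; last exact: hoff.
case: (eqVneq (x i0 j0) 0) => // hne; exfalso.
have anti : forall a b, dflow E x a b -> ~~ dflow E x b a.
  case=> [i|j] [i'|j'] //= /andP [_ h]; apply/negP => /andP [_ h'].
    by move: (lt_trans h h'); rewrite ltxx.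
  by move: (lt_trans h h'); rewrite ltxx.
have step : forall a b, dflow E x a b -> exists c, dflow E x b c.
  case=> [i|j] [i'|j'] //= /andP [hij h].
    case: (boolP [exists i'', ((i'',j') \in E) && (0 < x i'' j')]) =>
      [/existsP [i'' hi''] | /existsPn hno]; first by exists (inl i'').
    exfalso; have := hcol j'; rewrite (bigD1 i) //=.
    have : \sum_(i'' | i'' != i) x i'' j' <= 0.
      apply: sumr_le0 => i'' _; case: (boolP ((i'',j') \in E)) => hE''.
        by move: (hno i''); rewrite hE'' /= -leNgt.
      by rewrite hoff.
    move=> h2 h3; lra.
  case: (boolP [exists j'', ((i',j'') \in E) && (x i' j'' < 0)]) =>
    [/existsP [j'' hj''] | /existsPn hno]; first by exists (inr j'').
  exfalso; have := hrow i'; rewrite (bigD1 j) //=.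
  have : 0 <= \sum_(j'' | ((i',j'') \in E) && (j'' != j)) mu i' j'' * x i' j''.
    apply: sumr_ge0 => j'' /andP [hE'' _]; apply: mulr_ge0; first exact/ltW/hmu.
    by move: (hno j''); rewrite hE'' /= -leNgt.
  have := mulr_gt0 (hmu _ _ hij) h.
  move=> h1 h2 h3; lra.
have sub : subrel (dflow E x) (gadj E).
  by case=> [i|j] [i'|j'] //= /andP [].
have [a [b dab]] : exists a b, dflow E x a b.
  case: (ltgtP (x i0 j0) 0) => h.
  - by exists (inl i0), (inr j0); rewrite /= hE h.
  - by exists (inr j0), (inl i0); rewrite /= hE h.
  - by move: hne; rewrite h eqxx.
have [c [hu hs hc]] := @dcycle _ _ anti step _ _ dab.
by move: (hac c hu hs); rewrite (sub_cycle sub hc).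
Qed.

Theorem lemma2 (R : realFieldType) (I J : nat) (E : {set 'I_I * 'I_J})
  (mu : 'I_I -> 'I_J -> R)
  (Psi : 'cV[R]_I -> 'cV[R]_J -> 'M[R]_(I, J))
  (ihat : 'I_I) (jhat : 'I_J) (B1 : 'M[R]_I) (B2 : 'M[R]_(I, J)) :
  is_tree E ->
  (forall i j, (i, j) \in E -> 0 < mu i j) ->
  is_Psi E Psi ->
  (ihat, jhat) \in E ->
  are_B E mu Psi jhat B1 B2 ->
  exists2 c : R, 0 < c &
    forall u : 'cV[R]_J, (forall j, 0 <= u j 0) -> \sum_j u j 0 = 1 ->
      c <= 1 + \sum_i (invmx B1 *m B2 *m u) i 0.
Proof.
move=> [hcon hac] hmu hPsi hE [hB2 hB].
have key : forall a b, inD a b -> (forall i, (B1 *m a + B2 *m b) i 0 = 0) ->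
    (forall j, 0 <= b j 0) -> forall i j, Psi a b i j = 0.
  move=> a b hab hz hb; have [hoff hrs hcs] := hPsi a b hab.
  apply: (@flow_zero _ _ _ E mu (Psi a b) hac hmu hoff) => [i|j]; first by rewrite hB // hz.
  by rewrite hcs.
have inj : forall a : 'cV[R]_I, B1 *m a = 0 -> a = 0.
  suff wl : forall a : 'cV[R]_I, 0 <= \sum_i a i 0 -> B1 *m a = 0 -> a = 0.
    move=> a ha; case: (lerP 0 (\sum_i a i 0)) => h; first exact: wl.
    apply: oppr_inj; rewrite oppr0; apply: wl; last by rewrite mulmxN ha oppr0.
    under eq_bigr do rewrite mxE.
    by rewrite sumrN oppr_ge0 ltW.
  move=> a hs ha.
  set s := \sum_i a i 0.
  pose b : 'cV[R]_J := \col_j (if j == jhat then s else 0).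
  have hb j : b j 0 = if j == jhat then s else 0 by rewrite mxE.
  have hab : inD a b.
    rewrite /inD [RHS](bigD1 jhat) //= hb eqxx [X in _ + X]big1 ?addr0 // => j /negbTE hj.
    by rewrite hb hj.
  have hz : forall i, (B1 *m a + B2 *m b) i 0 = 0.
    move=> i; rewrite mxE ha mxE add0r mxE (bigD1 jhat) //= hB2 mul0r add0r.
    by rewrite big1 // => j /negbTE hj; rewrite hb hj mulr0.
  have hb0 : forall j, 0 <= b j 0 by move=> j; rewrite hb; case: ifP.
  have hP := key a b hab hz hb0.
  have [_ hrs _] := hPsi a b hab.
  apply/matrixP => i k; rewrite (ord1 k) -hrs mxE big1 // => j _.
have hU : B1 \in unitmx.
  rewrite -unitmx_tr -row_free_unit -kermx_eq0; apply/eqP/row_matrixP => k.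
  set r := row k (kermx B1^T).
  have hr : r *m B1^T = 0 by rewrite /r -row_mul mulmx_ker row0.
  have : B1 *m r^T = 0 by rewrite -{1}(trmxK B1) -trmx_mul hr trmx0.
  by move/inj => /(congr1 trmx); rewrite trmxK trmx0 row0.
set M := invmx B1 *m B2.
have hBM : B1 *m M = B2 by rewrite /M mulmxA mulmxV // mul1mx.
pose v j := 1 + \sum_i M i j.
have vpos : forall j, 0 < v j.
  move=> j; case: (eqVneq j jhat) => [->|hj].
    rewrite /v big1 ?addr0 ?ltr01 // => i _.
    by rewrite /M mxE big1 // => k _; rewrite hB2 mulr0.
  pose a : 'cV[R]_I := \col_i (- M i j).
  have ha i : a i 0 = - M i j by rewrite mxE.
  set t := \sum_i a i 0 - 1.
  pose b : 'cV[R]_J := \col_k (if k == j then 1 else if k == jhat then t else 0).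
  have hb k : b k 0 = if k == j then 1 else if k == jhat then t else 0 by rewrite mxE.
  have hjj : jhat != j by rewrite eq_sym.
  have hab : inD a b.
    rewrite /inD [RHS](bigD1 j) //= [X in _ + X](bigD1 jhat) //= !hb eqxx.
    rewrite (negbTE hjj) eqxx [X in _ + (_ + X)]big1 ?addr0 /t.
      by rewrite addrC subrK.
    by move=> k /andP [hk1 hk2]; rewrite hb (negbTE hk1) (negbTE hk2).
  have hz : forall i, (B1 *m a + B2 *m b) i 0 = 0.
    move=> i; rewrite mxE.
    have -> : (B1 *m a) i 0 = - B2 i j.
      rewrite -hBM !mxE -sumrN; apply: eq_bigr => k _.
      by rewrite ha mulrN.
    rewrite mxE (bigD1 j) //= hb eqxx mulr1 (bigD1 jhat) /=; last by [].
    rewrite hb (negbTE hjj) eqxx hB2 mul0r add0r big1 ?addr0 ?addNr //.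
    by move=> k /andP [hk1 hk2]; rewrite hb (negbTE hk1) (negbTE hk2) mulr0.
  case: (lerP 0 t) => ht.
    have hb0 : forall k, 0 <= b k 0.
      move=> k; rewrite hb; case: ifP => _ //; case: ifP => _ //.
    have hP := key a b hab hz hb0.
    have [_ _ hcs] := hPsi a b hab.
    move: (hcs j); rewrite hb eqxx big1 ?hP // => /eqP.
    by rewrite eq_sym oner_eq0.
  have : t = - v j.
    rewrite /t /v; under eq_bigr do rewrite ha.
    by rewrite sumrN opprD addrC.
  by move=> htv; move: ht; rewrite htv oppr_lt0.
case: (@arg_minP _ _ _ jhat xpredT v isT) => j0 _ hmin.
exists (v j0); first exact: vpos.
move=> u hu hsum.
have -> : 1 + \sum_i (M *m u) i 0 = \sum_j u j 0 * v j.
  rewrite /v; under [RHS]eq_bigr do rewrite mulrDr mulr1.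
  rewrite big_split /= hsum; congr (_ + _).
  under eq_bigr do rewrite mxE.
  rewrite exchange_big /=; apply: eq_bigr => j _.
  by rewrite mulr_sumr; apply: eq_bigr => i _; rewrite mulrC.
have -> : v j0 = \sum_j u j 0 * v j0 by rewrite -mulr_suml hsum mul1r.
by apply: ler_sum => j _; apply: ler_wpM2l; [exact: hu | exact: hmin].
Qed.
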